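(* Let $F:\mathbb{R}^d\to\mathbb{R}^d$ be $L$-Lipschitz, let $x^*$ satisfy $F(x^* )=0$, and suppose $F$ satisfies the weak Minty condition with parameter $0<\rho<\frac1{2L}$. Consider the deterministic past extragradient method: given $x_0$, $\hat x_{-1}=x_0$, and for $k\ge0$, $\hat x_k=x_k-\gamma F(\hat x_{k-1})$, $x_{k+1}=x_k-\omega F(\hat x_k)$, with $$\max\Big\{2\rho,\frac1{2L}\Big\}<\gamma<\frac1L,\qquad 0<\omega<\min\Big\{\gamma-2\rho,\frac1{4L}-\frac\gamma4\Big\}.$$ Then for all $K\ge2$, $$\min_{0\le k\le K-1}\|F(\hat x_k)\|^2\le\frac{C\|x_0-x^*\|^2}{K-1},\qquad C=\frac{48}{\omega\gamma(1-L(\gamma+4\omega))}.$$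
   Context: $L$-Lipschitz: $\|F(x)-F(y)\|\le L\|x-y\|$. Weak Minty condition with parameter $\rho>0$: $\langle F(x),x-x^*\rangle\ge-\rho\|F(x)\|^2$ for all $x$. (This is the deterministic case $\delta=0$, $\sigma_*^2=0$ of stochastic past extragradient.) *)

(* Defs.v *)
From mathcomp Require Import all_boot all_order all_algebra.
From mathcomp Require Import reals.
Set Implicit Arguments. Unset Strict Implicit. Unset Printing Implicit Defensive.
Import Order.TTheory GRing.Theory Num.Theory.
Local Open Scope ring_scope.

Definition dotv (R : realType) (d : nat) (u v : 'rV[R]_d) : R :=
  \sum_(i < d) u 0 i * v 0 i.
Definition enorm (R : realType) (d : nat) (v : 'rV[R]_d) : R :=
  Num.sqrt (dotv v v).

Definition lipschitz (R : realType) (d : nat) (L : R) (F : 'rV[R]_d -> 'rV[R]_d) :=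
  forall x y, enorm (F x - F y) <= L * enorm (x - y).

Definition weak_minty (R : realType) (d : nat) (rho : R)
  (F : 'rV[R]_d -> 'rV[R]_d) (xs : 'rV[R]_d) :=
  forall x, dotv (F x) (x - xs) >= - rho * (enorm (F x)) ^+ 2.

(* Deterministic past extragradient: pe_iter k = (x_k, xhat_{k-1}),
   with xhat_{-1} = x_0;  xhat_k = x_k - gamma F(xhat_{k-1}),
   x_{k+1} = x_k - omega F(xhat_k). *)
Fixpoint pe_iter (R : realType) (d : nat) (F : 'rV[R]_d -> 'rV[R]_d)
  (gamma omega : R) (x0 : 'rV[R]_d) (k : nat) : 'rV[R]_d * 'rV[R]_d :=
  match k with
  | 0 => (x0, x0)
  | k'.+1 =>
      let (xk, xhprev) := pe_iter F gamma omega x0 k' in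
      let xhk := xk - gamma *: F xhprev in
      (xk - omega *: F xhk, xhk)
  end.

Definition pe_x (R : realType) (d : nat) (F : 'rV[R]_d -> 'rV[R]_d)
  (gamma omega : R) (x0 : 'rV[R]_d) (k : nat) : 'rV[R]_d :=
  (pe_iter F gamma omega x0 k).1.

Definition pe_xhat (R : realType) (d : nat) (F : 'rV[R]_d -> 'rV[R]_d)
  (gamma omega : R) (x0 : 'rV[R]_d) (k : nat) : 'rV[R]_d :=
  let p := pe_iter F gamma omega x0 k in p.1 - gamma *: F p.2.

(* Main.v *)
Require Import Defs.
From mathcomp Require Import all_boot all_order all_algebra.
From mathcomp Require Import reals.
From mathcomp Require Import ring lra.
Import Order.TTheory GRing.Theory Num.Theory.
Local Open Scope ring_scope.
Set Implicit Arguments. Unset Strict Implicit.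

Section Dot.
Variables (R : realType) (d : nat).
Implicit Types u v w : 'rV[R]_d.

Lemma dotvC u v : dotv u v = dotv v u.
Proof. by apply: eq_bigr => i _; rewrite mulrC. Qed.
Lemma dotvDl u v w : dotv (u + v) w = dotv u w + dotv v w.
Proof. by rewrite /dotv -big_split; apply: eq_bigr => i _; rewrite mxE mulrDl. Qed.
Lemma dotvNl u w : dotv (- u) w = - dotv u w.
Proof. by rewrite /dotv -sumrN; apply: eq_bigr => i _; rewrite mxE mulNr. Qed.
Lemma dotvZl a u w : dotv (a *: u) w = a * dotv u w.
Proof. by rewrite /dotv mulr_sumr; apply: eq_bigr => i _; rewrite mxE mulrA. Qed.
Lemma dotvDr u v w : dotv w (u + v) = dotv w u + dotv w v.
Proof. by rewrite dotvC dotvDl !(dotvC w). Qed.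
Lemma dotvNr u w : dotv w (- u) = - dotv w u.
Proof. by rewrite dotvC dotvNl dotvC. Qed.
Lemma dotvZr a u w : dotv w (a *: u) = a * dotv w u.
Proof. by rewrite dotvC dotvZl dotvC. Qed.
Lemma dotv_ge0 u : 0 <= dotv u u.
Proof. by apply: sumr_ge0 => i _; rewrite -expr2 sqr_ge0. Qed.
Lemma enorm2 u : enorm u ^+ 2 = dotv u u.
Proof. by rewrite /enorm sqr_sqrtr // dotv_ge0. Qed.
Lemma enorm_ge0 u : 0 <= enorm u.
Proof. exact: sqrtr_ge0. Qed.

Lemma lip2 (L : R) (F : 'rV[R]_d -> 'rV[R]_d) : 0 < L -> lipschitz L F ->
  forall x y, dotv (F x - F y) (F x - F y) <= L ^+ 2 * dotv (x - y) (x - y).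
Proof.
move=> L0 HL x y; rewrite -!enorm2 -exprMn.
rewrite !expr2; apply: ler_pM; rewrite ?enorm_ge0 //; exact: HL.
Qed.

Lemma young_split (q : R) u v : 0 < q -> q < 1 ->
  dotv (u + v) (u + v) <= dotv u u / (1 - q) + dotv v v / q.
Proof.
move=> q0 q1.
have h := dotv_ge0 (q *: u - (1 - q) *: v).
rewrite !(dotvDl, dotvDr, dotvNl, dotvNr, dotvZl, dotvZr) in h.
rewrite !(dotvDl, dotvDr) (dotvC v u).
have s0 : 0 < 1 - q by lra.
set a := dotv u u in h *; set b := dotv v v in h *; set c := dotv u v in h *.
rewrite (dotvC v u) -/c in h.
have -> : a / (1 - q) + b / q = a + b + (a * q / (1-q) + b * (1-q) / q).
  by field; rewrite ?gt_eqF ?subr_gt0 //.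
suff: 2 * c <= a * q / (1 - q) + b * (1 - q) / q by lra.
have -> : a * q / (1 - q) + b * (1 - q) / q = (q^2 * a + (1-q)^2 * b) / (q * (1-q)).
  by field; rewrite ?gt_eqF ?subr_gt0 //.
rewrite ler_pdivlMr ?mulr_gt0 //. nra.
Qed.
End Dot.
Section Iter.
Variables (R : realType) (d : nat) (F : 'rV[R]_d -> 'rV[R]_d) (gamma omega : R) (x0 : 'rV[R]_d).
Local Notation x := (pe_x F gamma omega x0).
Local Notation xh := (pe_xhat F gamma omega x0).
Definition gp k := F (pe_iter F gamma omega x0 k).2.
Local Notation N2 v := (dotv v v).

Lemma xh_eq k : xh k = x k - gamma *: gp k.
Proof. by []. Qed.
Lemma x_succ k : x k.+1 = x k - omega *: F (xh k).
Proof. by rewrite /pe_x /pe_xhat /=; case: (pe_iter F gamma omega x0 k). Qed.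
Lemma gp_succ k : gp k.+1 = F (xh k).
Proof. by rewrite /gp /pe_xhat /=; case: (pe_iter F gamma omega x0 k). Qed.
Lemma gp0 : gp 0 = F x0. Proof. by []. Qed.
Lemma x0E : x 0 = x0. Proof. by []. Qed.

Lemma step1 (rho : R) xs k : weak_minty rho F xs -> 0 < omega -> 0 <= gamma - 2 * rho - omega ->
  N2 (x k.+1 - xs) <= N2 (x k - xs) - omega * gamma * N2 (gp k)
     + omega * gamma * N2 (F (xh k) - gp k).
Proof.
move=> hm w0 hg.
have h1 := hm (xh k); rewrite enorm2 in h1.
have e : xh k - xs = (x k - xs) - gamma *: gp k by rewrite xh_eq addrAC.
rewrite e in h1; rewrite x_succ.
have -> : x k - omega *: F (xh k) - xs = (x k - xs) - omega *: F (xh k).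
  by rewrite addrAC.
move: h1.
clear e; move: (x k - xs) (F (xh k)) (gp k) => u g h.
rewrite !(dotvDl, dotvDr, dotvNl, dotvNr, dotvZl, dotvZr) => h1.
rewrite (dotvC u g) (dotvC h g).
have G0 := dotv_ge0 g.
have t1 := mulr_ge0 (ltW w0) (mulr_ge0 G0 hg).
have t2 := ler_wpM2l (ltW w0) h1.
lra.
Qed.
End Iter.
Section Iter2.
Variables (R : realType) (d : nat) (F : 'rV[R]_d -> 'rV[R]_d) (gamma omega L : R) (x0 : 'rV[R]_d).
Local Notation x := (pe_x F gamma omega x0).
Local Notation xh := (pe_xhat F gamma omega x0).
Local Notation gp := (gp F gamma omega x0).
Local Notation N2 v := (dotv v v).
Hypothesis L0 : 0 < L.
Hypothesis HL : lipschitz L F.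

Lemma step2 k : 0 < L * gamma -> L * gamma < 1 ->
  N2 (F (xh k.+1) - gp k.+1) <= L^+2 * omega^+2 / (1 - L * gamma) * N2 (F (xh k))
     + L * gamma * N2 (F (xh k) - gp k).
Proof.
move=> q0 q1.
rewrite gp_succ.
apply: le_trans (lip2 L0 HL _ _) _.
have -> : xh k.+1 - xh k = (- omega) *: F (xh k) + (- gamma) *: (F (xh k) - gp k).
  rewrite xh_eq gp_succ x_succ.
  rewrite -/(xh k); move: (F (xh k)) => b; rewrite xh_eq.
  by apply/rowP => i; rewrite !mxE; ring.
have := young_split (- omega *: F (xh k)) (- gamma *: (F (xh k) - gp k)) q0 q1.
rewrite !(dotvZl, dotvZr).
move: (N2 (F (xh k))) (N2 (F (xh k) - gp k)) (dotv_ge0 (F (xh k))) (dotv_ge0 (F (xh k) - gp k)).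
move=> G D G0 D0 h.
apply: le_trans (ler_wpM2l _ h) _; first by rewrite sqr_ge0.
have s0 : 0 < 1 - L * gamma by lra.
rewrite le_eqVlt; apply/orP; left; apply/eqP.
have g0 : gamma != 0 by apply/eqP => g; rewrite g mulr0 ltxx in q0.
field. by rewrite g0 !gt_eqF.
Qed.

Lemma stepD0 : N2 (F (xh 0) - gp 0) <= (L * gamma)^+2 * N2 (gp 0).
Proof.
apply: le_trans (lip2 L0 HL _ _) _.
have -> : xh 0 - x0 = (- gamma) *: gp 0 by rewrite xh_eq x0E addrAC subrr add0r scaleNr.
rewrite dotvZl dotvZr le_eqVlt; apply/orP; left; apply/eqP; ring.
Qed.
End Iter2.
Lemma consts (R : realType) (L g w : R) : 0 < L -> 0 < g -> 0 < w -> L * g < 1 ->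
  4 * (L * w) < 1 - L * g ->
  1 + (w * g + w * g * (L * g) / (1 - L * g)) * (L * g) ^+ 2 * L ^+ 2 <=
  w * g * (1 - L ^+ 2 * w ^+ 2 / (1 - L * g) / (1 - L * g)) *
    (48 / (w * g * (1 - L * (g + 4 * w)))).
Proof.
move=> L0 g0 w0 q1 h4.
set q := L * g in q1 h4 *.
have s0 : 0 < 1 - q by lra.
have q0 : 0 < q by rewrite mulr_gt0.
set r := L * w / (1 - q).
have r0 : 0 < r by rewrite divr_gt0 ?mulr_gt0.
have r4 : r < 1/4.
  rewrite /r ltr_pdivrMr //; lra.
have t0 : 0 < 1 - q - 4 * (L * w) by lra.
have Lw0 : 0 < L * w by rewrite mulr_gt0.
have t1 : 1 - q - 4 * (L * w) <= 1 by lra.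
have e1 : 1 + (w * g + w * g * q / (1 - q)) * q ^+ 2 * L ^+ 2 = 1 + q^+3 * r.
  rewrite /r /q; field; rewrite gt_eqF //.
have e2 : w * g * (1 - L ^+ 2 * w ^+ 2 / (1 - q) / (1 - q)) *
    (48 / (w * g * (1 - L * (g + 4 * w)))) = 48 * (1 - r^+2) / (1 - q - 4 * (L * w)).
  have -> : 1 - L * (g + 4 * w) = 1 - q - 4 * (L * w) by rewrite /q; ring.
  rewrite /r; field.
  by rewrite !gt_eqF.
rewrite e1 e2 ler_pdivlMr //.
have q3 : q ^+ 3 <= 1.
  by rewrite exprn_ile1 // ltW.
have : q ^+ 3 * r <= r by rewrite ler_piMl // ltW.
nra.
Qed.
Unset Implicit Arguments.
Theorem corollary4p6 (R : realType) (d : nat) (F : 'rV[R]_d -> 'rV[R]_d)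
  (L rho gamma omega : R) (xs x0 : 'rV[R]_d) :
  0 < L ->
  lipschitz L F ->
  F xs = 0 ->
  weak_minty rho F xs ->
  0 < rho -> rho < 1 / (2 * L) ->
  Num.max (2 * rho) (1 / (2 * L)) < gamma -> gamma < 1 / L ->
  0 < omega -> omega < Num.min (gamma - 2 * rho) (1 / (4 * L) - gamma / 4) ->
  forall K : nat, (2 <= K)%N ->
  exists k : nat, (k <= K - 1)%N /\
    (enorm (F (pe_xhat F gamma omega x0 k))) ^+ 2 <=
      (48 / (omega * gamma * (1 - L * (gamma + 4 * omega))))
        * (enorm (x0 - xs)) ^+ 2 / (K - 1)%:R.
Proof.
move=> L0 HL Fxs HM rho0 _ hmax hg1 w0 hmin K K2.
move: hmax; rewrite gt_max => /andP[h2r hg2].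
move: hmin; rewrite lt_min => /andP[hw1 hw2].
have g0 : 0 < gamma by lra.
have q1 : L * gamma < 1 by move: hg1; rewrite ltr_pdivlMr // mulrC.
have qh : 1 < 2 * (L * gamma).
  by move: hg2; rewrite ltr_pdivrMr ?mulr_gt0 //; lra.
have q0 : 0 < L * gamma by lra.
have h4 : 4 * (L * omega) < 1 - L * gamma.
  have : omega + gamma / 4 < 1 / (4 * L) by lra.
  rewrite ltr_pdivlMr ?mulr_gt0 // => h.
  have -> : 4 * (L * omega) = (omega + gamma / 4) * (4 * L) - L * gamma by field.
  lra.
have hg : 0 <= gamma - 2 * rho - omega by lra.
set q := L * gamma in q0 q1 qh h4 *.
have s0 : 0 < 1 - q by lra.
pose A n := dotv (pe_x F gamma omega x0 n - xs) (pe_x F gamma omega x0 n - xs).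
pose G n := dotv (F (pe_xhat F gamma omega x0 n)) (F (pe_xhat F gamma omega x0 n)).
pose D n := dotv (F (pe_xhat F gamma omega x0 n) - gp F gamma omega x0 n)
                 (F (pe_xhat F gamma omega x0 n) - gp F gamma omega x0 n).
pose P n := dotv (gp F gamma omega x0 n) (gp F gamma omega x0 n).
pose c := omega * gamma * q / (1 - q).
pose b := L ^+ 2 * omega ^+ 2 / (1 - q).
pose c' := omega * gamma * (1 - b / (1 - q)).
pose Phi n := A n.+1 + c * D n.
have wg0 : 0 < omega * gamma by rewrite mulr_gt0.
have c0 : 0 <= c by rewrite divr_ge0 ?mulr_ge0 ?ltW.
have S1 n : A n.+1 <= A n - omega * gamma * P n + omega * gamma * D n.
  exact: (step1 x0 n HM w0 hg).
have S2 n : D n.+1 <= b * G n + q * D n.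
  exact: (step2 omega x0 L0 HL n q0 q1).
have PS n : P n.+1 = G n by rewrite /P /G gp_succ.
have dec n : Phi n.+1 + c' * G n <= Phi n.
  rewrite /Phi.
  have h1 := S1 n.+1; rewrite PS in h1.
  have h2 := ler_wpM2l (addr_ge0 (ltW wg0) c0) (S2 n).
  have eq : (omega * gamma + c) * (b * G n + q * D n) = (omega * gamma - c') * G n + c * D n.
    by rewrite /c' /c /b; field; rewrite gt_eqF.
  rewrite eq in h2.
  lra.
have P0 : 0 <= P 0 by exact: dotv_ge0.
have A00 : 0 <= A 0 by exact: dotv_ge0.
pose N := 1 + (omega * gamma + c) * q ^+ 2 * L ^+ 2.
have Phi0 : Phi 0 <= N * A 0.
  have h1 := S1 0.
  have h2 : D 0 <= q ^+ 2 * P 0 by exact: (stepD0 gamma omega x0 L0 HL).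
  have h3 : P 0 <= L ^+ 2 * A 0.
    have := lip2 L0 HL x0 xs; rewrite Fxs subr0 //.
  have h4' := ler_wpM2l (addr_ge0 (ltW wg0) c0) h2.
  have h5 := ler_wpM2l (mulr_ge0 (addr_ge0 (ltW wg0) c0) (sqr_ge0 q)) h3.
  rewrite /Phi /N; nra.
have bq : b / (1 - q) < 1.
  rewrite /b ltr_pdivrMr // ltr_pdivrMr // !mul1r.
  have Lw0 : 0 < L * omega by rewrite mulr_gt0.
  have -> : L ^+ 2 * omega ^+ 2 = (L * omega) ^+ 2 by rewrite exprMn.
  nra.
have c'0 : 0 < c' by rewrite /c' mulr_gt0 // subr_gt0.
set M := 48 / (omega * gamma * (1 - L * (gamma + 4 * omega))) * enorm (x0 - xs) ^+ 2 / (K - 1)%:R.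
have IH n : (exists2 k, (k < n)%N & G k <= M) \/
   (Phi n + n%:R * (c' * M) <= Phi 0 /\ ((0 < n)%N -> Phi n + n%:R * (c' * M) < Phi 0)).
  elim: n => [|n [[k kn Gk]|[IH1 IH2]]].
  - by right; rewrite mul0r addr0 lexx.
  - by left; exists k => //; rewrite ltnS ltnW.
  - case: (leP (G n) M) => hGn; first by left; exists n.
    right.
    have hd := dec n.
    have hm : c' * M < c' * G n by rewrite ltr_pM2l.
    rewrite [_%:R]mulrSr.
    have ht : Phi n.+1 + (n%:R + 1) * (c' * M) < Phi 0.
      case: n IH1 IH2 hd hm hGn => [|n] IH1 IH2 hd hm hGn.
        rewrite (_ : 0%:R = 0 :> R) // add0r mul1r; lra.
      have := IH2 isT; lra.
    by split => //; apply: ltW.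
have Kp : (0 < K - 1)%N by rewrite subn_gt0.
case: (IH (K - 1)%N) => [[k kK Gk]|[_ /(_ Kp) hK]].
  by exists k; split; [apply: ltnW | rewrite enorm2].
exfalso.
have PhiK : 0 <= Phi (K - 1)%N by rewrite /Phi addr_ge0 ?dotv_ge0 // mulr_ge0 // dotv_ge0.
have KR : (K - 1)%:R != 0 :> R by rewrite pnatr_eq0 -lt0n.
have eM : (K - 1)%:R * (c' * M) = c' * (48 / (omega * gamma * (1 - L * (gamma + 4 * omega)))) * A 0.
  rewrite /M enorm2 (_ : dotv (x0 - xs) (x0 - xs) = A 0) //; field.
  rewrite KR !gt_eqF //.
  have -> : 1 - L * (gamma + 4 * omega) = 1 - q - 4 * (L * omega) by rewrite /q; ring.
  lra.
have hc := consts L0 g0 w0 q1 h4.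
have := ler_wpM2r A00 hc.
rewrite -/q -/c -/b -/c' -/N.
lra.
Qed.
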